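(* Let $\ell\le D/8$. There is a non-adaptive deterministic group testing algorithm that, when an integer $D$ with $d/4\le D\le 4d$ is known in advance to the algorithm, detects $\ell$ defective items among any defective set $I\subseteq[n]$ of size $d$ and makes $O(d\log(n/d))$ tests.
   Context: Group testing: items $X=[n]$, unknown defective set $I\subseteq X$ with $d=|I|$. A test $Q\subseteq X$ has answer $1$ if $Q\cap I\neq\emptyset$ and $0$ otherwise; the algorithm accesses $I$ only through tests. A non-adaptive algorithm fixes all its tests in advance (they do not depend on answers), then computes its output from the answers. ''Detects $\ell$ defective items'' means it outputs $L\subseteq I$ with $|L|=\ell$. Logarithms are base 2. *)

(* Defs.v *)
From mathcomp Require Import all_boot.
From Stdlib Require Import Reals.
Set Implicit Arguments. Unset Strict Implicit. Unset Printing Implicit Defensive.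

Definition log2 (x : R) : R := (ln x / ln 2)%R.

Definition test_answer (n : nat) (I Q : {set 'I_n}) : bool := Q :&: I != set0.

(* A deterministic non-adaptive group testing algorithm on items [n] = 'I_n:
   a number of tests, the tests fixed in advance, and a decoder computing the
   output from the vector of answers only. *)
Record nonadaptive_alg (n : nat) := NonAdaptive {
  ntests : nat;
  tests : 'I_ntests -> {set 'I_n};
  decode : ('I_ntests -> bool) -> {set 'I_n} }.

Definition run (n : nat) (A : nonadaptive_alg n) (I : {set 'I_n}) : {set 'I_n} :=
  @decode n A (fun j => test_answer I (@tests n A j)).

Definition detects (n : nat) (A : nonadaptive_alg n) (l d : nat) : Prop :=
  forall I : {set 'I_n}, #|I| = d -> run A I \subset I /\ #|run A I| = l.

(* Main.v *)
Require Import Defs.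
From mathcomp Require Import all_boot zify.
From Stdlib Require Import Reals Lra.
Set Implicit Arguments. Unset Strict Implicit. Unset Printing Implicit Defensive.

Lemma INRmul m n : INR (m * n) = (INR m * INR n)%R.
Proof. by rewrite -mult_INR. Qed.
Lemma INRadd m n : INR (m + n) = (INR m + INR n)%R.
Proof. by rewrite -plus_INR. Qed.
Lemma INRexp m n : INR (expn m n) = (INR m ^ n)%R.
Proof. elim: n => [|n IH]; first by rewrite expn0. by rewrite expnS INRmul IH. Qed.
Lemma INRleq m n : m <= n -> (INR m <= INR n)%R.
Proof. by move/leP; apply: le_INR. Qed.
Lemma INRleq' m n : (INR m <= INR n)%R -> m <= n.
Proof. by move/INR_le/leP. Qed.

Lemma exp_pow_n (x : R) n : (exp x ^ n = exp (INR n * x))%R.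
Proof.
elim: n => [|n IH]; first by rewrite /= Rmult_0_l exp_0.
rewrite [LHS]/= IH -exp_plus S_INR; congr exp; ring.
Qed.

Lemma succ_pow_le s : expn s.+1 s <= 3 * expn s s.
Proof.
case: s => [|s]; first by rewrite !expn0.
apply: INRleq'. rewrite INRmul !INRexp.
set t := s.+1.
have Ht : (0 < INR t)%R by apply: lt_0_INR; apply/ltP.
have E : (INR t.+1 = INR t * (1 + / INR t))%R by rewrite S_INR; field; lra.
rewrite E Rpow_mult_distr.
have H1 : ((1 + / INR t) ^ t <= 3)%R.
  apply: (Rle_trans _ (exp 1)); last exact: exp_le_3.
  apply: (Rle_trans _ (exp (/ INR t) ^ t)).
    apply: pow_incr; split; last exact: exp_ineq1_le.
    have := Rinv_0_lt_compat _ Ht; lra.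
  rewrite exp_pow_n Rinv_r; [lra | lra].
have H2 : (0 <= INR t ^ t)%R by apply: pow_le; lra.
simpl (INR 3). nra.
Qed.

Lemma pow_fact s : expn s s <= expn 3 s * s`!.
Proof.
elim: s => [|s IH]; first by rewrite !expn0.
rewrite expnS factS.
apply: leq_trans (_ : s.+1 * (3 * expn s s) <= _).
  by rewrite leq_mul2l succ_pow_le orbT.
apply: leq_trans (leq_mul (leqnn _) (leq_mul (leqnn 3) IH)) _.
rewrite expnS; set a := expn 3 s; set b := s`!; nia.
Qed.

Lemma leq_expl m n e : m <= n -> expn m e <= expn n e.
Proof. by case: e => [|e] H; [rewrite !expn0 | rewrite leq_exp2r]. Qed.

Lemma ffact_le n s : n ^_ s <= expn n s.
Proof.
elim: s n => [|s IH] n; first by rewrite ffactn0 expn0.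
rewrite ffactnS expnS leq_mul2l; apply/orP; right.
apply: leq_trans (IH _) _. by apply: leq_expl; apply: leq_pred.
Qed.

Lemma binom_pow n s : 'C(n, s) * expn s s <= expn 3 s * expn n s.
Proof.
apply: leq_trans (leq_mul (leqnn _) (pow_fact s)) _.
rewrite mulnCA leq_mul2l bin_ffact ffact_le orbT //.
Qed.

Lemma key_num n s M k Kp : 0 < s -> s <= M -> n < expn 2 k.+1 * M -> k + 4 <= Kp ->
  expn 2 s * 'C(n, s) * expn 2 (s * (20 * Kp)) * expn s (Kp * s + 1)
  <= expn (expn 2 21 * M) (Kp * s + 1).
Proof.
move=> s0 sM nM kK.
set e := (Kp - 1) * s + 1.
have He : Kp * s + 1 = s + e by rewrite /e; nia.
have E1 : expn s (Kp * s + 1) = expn s s * expn s e by rewrite He expnD.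
have E2 : expn (expn 2 21 * M) (Kp * s + 1) = expn 2 (21 * (s + e)) * (expn M s * expn M e).
  by rewrite He expnMn -expnM expnD.
rewrite E1 E2.
have h1 := binom_pow n s.
have h2 : expn n s <= expn 2 ((k + 1) * s) * expn M s.
  rewrite expnM -expnMn; apply: leq_expl; rewrite addn1; exact: ltnW.
have h3 : expn 3 s <= expn 2 (2 * s) by rewrite expnM; apply: leq_expl.
have h4 : expn s e <= expn M e by apply: leq_expl.
have h5 : expn 2 s * expn 2 (2 * s) * expn 2 ((k + 1) * s) * expn 2 (s * (20 * Kp))
    <= expn 2 (21 * (s + e)).
  rewrite -!expnD leq_exp2l //; rewrite /e; nia.
set a := expn 2 s in h5 *; set b := expn 2 (2 * s) in h3 h5 *.
set c := expn 2 ((k + 1) * s) in h2 h5 *; set d := expn 2 (s * (20 * Kp)) in h5 *.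
set m1 := expn M s in h2 *; set m2 := expn M e in h4 *.
set C := 'C(n, s) in h1 *; set ss := expn s s in h1 *; set se := expn s e in h4 *.
set t3 := expn 3 s in h1 h3 *; set ns := expn n s in h1 h2 *.
set R := expn 2 (21 * (s + e)) in h5 *.
have g1 : C * ss <= b * (c * m1).
  apply: leq_trans h1 _; apply: leq_mul => //.
apply: (@leq_trans (a * (b * (c * m1)) * d * m2)).
  have -> : a * C * d * (ss * se) = a * (C * ss) * d * se by nia.
  apply: leq_mul; [apply: leq_mul; [apply: leq_mul|] |] => //.
apply: (@leq_trans ((a * b * c * d) * (m1 * m2))).
  by apply: eq_leq; nia.
by apply: leq_mul.
Qed.

Lemma ln_le' x y : (0 < x)%R -> (x <= y)%R -> (ln x <= ln y)%R.
Proof.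
move=> x0 [xy|->]; last by apply: Rle_refl.
by apply: Rlt_le; apply: ln_increasing.
Qed.

Lemma ln2_pos : (0 < ln 2)%R.
Proof. have := ln_lt_2; have : (0 < / 2)%R by apply: Rinv_0_lt_compat; lra. lra. Qed.

Lemma log2_ge0 n d : 1 <= d -> d <= n -> (0 <= log2 (INR n / INR d))%R.
Proof.
move=> d1 dn.
have Hd : (1 <= INR d)%R by have := INRleq d1.
have Hn : (INR d <= INR n)%R by apply: INRleq.
rewrite /log2; apply: Rmult_le_pos; last by apply: Rlt_le; apply: Rinv_0_lt_compat; apply: ln2_pos.
rewrite -ln_1; apply: ln_le'; first lra.
apply: (Rmult_le_reg_r (INR d)); first lra.
rewrite /Rdiv Rmult_assoc Rinv_l; lra.
Qed.

Lemma log2_k n d k : 1 <= d -> d <= n -> expn 2 k * d <= 4 * n ->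
  (INR k <= log2 (INR n / INR d) + 2)%R.
Proof.
move=> d1 dn H.
have Hd : (1 <= INR d)%R by have := INRleq d1.
have Hn : (INR d <= INR n)%R by apply: INRleq.
have H' := INRleq H; rewrite !INRmul INRexp in H'.
have P2 : (0 < 2 ^ k)%R by apply: pow_lt; lra.
have Hl0 : (0 < 2 ^ k * INR d)%R by nra.
have := ln_le' Hl0 H'.
rewrite ln_mult; [|done|lra]. rewrite ln_mult; [|simpl; lra|lra].
rewrite ln_pow; last lra.
have -> : INR 4 = (2 ^ 2)%R by simpl; ring.
rewrite ln_pow; last lra.
have L2 := ln2_pos.
rewrite /log2 /Rdiv ln_mult; [|lra|]; last by apply: Rinv_0_lt_compat; lra.
rewrite ln_Rinv; last lra.
move=> Hl.
apply: (Rmult_le_reg_r (ln 2)); first done.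
rewrite Rmult_plus_distr_r Rmult_assoc Rinv_l; last lra.
simpl INR in Hl. lra.
Qed.

Lemma final_bound n d D k : 1 <= d -> d <= n -> D <= 4 * d ->
  (k = 0 \/ expn 2 k * d <= 4 * n) ->
  (INR (20 * (k + 4) * (expn 2 21 * (5 * D))) <=
   INR (6 * (400 * expn 2 21)) * INR d * (log2 (INR n / INR d) + 1))%R.
Proof.
move=> d1 dn Dd Hk.
set P := expn 2 21. clearbody P.
have L0 := log2_ge0 d1 dn.
have Lk : (INR k <= log2 (INR n / INR d) + 2)%R.
  case: Hk => [->|]; first by rewrite /=; lra.
  exact: log2_k.
have H1 : 20 * (k + 4) * (P * (5 * D)) <= (400 * P) * ((k + 4) * d).
  clear -Dd.
  have -> : 20 * (k + 4) * (P * (5 * D)) = (100 * P * (k + 4)) * D by nia.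
  have -> : 400 * P * ((k + 4) * d) = (100 * P * (k + 4)) * (4 * d) by nia.
  by apply: leq_mul.
apply: Rle_trans (INRleq H1) _.
rewrite (INRmul (400 * P)) (INRmul 6) (INRmul (k + 4)) INRadd.
set L := log2 (INR n / INR d) in L0 Lk *.
set Q := INR (400 * P).
have HP : (0 <= Q)%R by apply: pos_INR.
have Hd : (0 <= INR d)%R by apply: pos_INR.
have E4 : INR 4 = 4%R by rewrite /=; ring.
have E6 : INR 6 = 6%R by rewrite /=; ring.
rewrite E4 E6.
have Hk4 : (INR k + 4 <= 6 * (L + 1))%R by lra.
have : ((INR k + 4) * INR d <= 6 * (L + 1) * INR d)%R by apply: Rmult_le_compat_r.
move=> H2.
have := Rmult_le_compat_l _ _ _ HP H2.
lra.
Qed.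

Lemma card_familyE (T rT : finType) (F : T -> pred rT) :
  #|(finfun.family F : pred {ffun T -> rT})| = \prod_(x : T) #|F x|.
Proof. by rewrite card_family foldrE big_image. Qed.

Lemma prod_if (T : finType) (X : {set T}) a b :
  \prod_(x : T) (if x \in X then a else b) = expn a #|X| * expn b (#|T| - #|X|).
Proof.
rewrite (bigID (fun x => x \in X)) /=.
rewrite [X in X * _](eq_bigr (fun _ => a)); last by move=> x Hx; rewrite Hx.
rewrite [X in _ * X](eq_bigr (fun _ => b)); last by move=> x Hx; rewrite (negbTE Hx).
rewrite prod_nat_const.
rewrite (eq_bigl (fun x => x \in ~: X)); last by move=> x; rewrite in_setC.
by rewrite prod_nat_const -(cardsC X) addKn.
Qed.

Lemma pick_some (T : finType) (P : pred T) x : [pick y | P y] = Some x -> P x.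
Proof. by case: pickP => // y Py [<-]. Qed.
Lemma pick_none (T : finType) (P : pred T) : [pick y | P y] = None -> forall x, ~~ P x.
Proof. by case: pickP => // H _ x; rewrite H. Qed.

Section Count.
Variables (n B : nat) (b0 : 'I_B).
Local Notation Fn := {ffun 'I_n -> 'I_B}.

Definition Gset (Z A : {set 'I_n}) : {set Fn} :=
  [set f : Fn | [forall z in Z, f z \in f @: A]].

Lemma card_G (Z A : {set 'I_n}) : A \subset Z ->
  #|Gset Z A| <= expn #|A| #|Z :\: A| * expn B (n - #|Z :\: A|).
Proof.
move=> AZ.
set X := Z :\: A.
pose D1 := [set f : Fn | f \in finfun.family (fun x => if x \in X then pred1 b0 else predT)].
pose D2 := [set g : {ffun 'I_n -> 'I_n} |
   g \in finfun.family (fun x => if x \in X then [pred y | y \in A] else pred1 x)].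
pose phi := fun p : Fn * {ffun 'I_n -> 'I_n} => [ffun x => p.1 (p.2 x)].
have sub : Gset Z A \subset phi @: setX D1 D2.
  apply/subsetP => f; rewrite inE => /forallP Hf.
  pose g := [ffun x => if x \in X then
              (if [pick a in A | f a == f x] is Some a then a else x) else x].
  pose f1 := [ffun x => if x \in X then b0 else f x] : Fn.
  have Hpick : forall x, x \in X -> exists2 a, a \in A & 
      ([pick a in A | f a == f x] = Some a) /\ f a = f x.
    move=> x xX.
    have xZ : x \in Z by move: xX; rewrite inE => /andP[].
    have := Hf x; rewrite xZ /= => /imsetP [a aA fxa].
    case: pickP => [a' /andP [a'A /eqP fa']|/(_ a)]; first by exists a'.
    by rewrite aA fxa eqxx.
  apply/imsetP; exists (f1, g).
    rewrite inE; apply/andP; split; rewrite inE; apply/familyP => x;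
      rewrite /f1 /g !ffunE; case: ifP => xX; rewrite /= ?inE ?eqxx //.
    case: pickP => [a' /andP[] //| H0].
    have [a aA [_ fa]] := Hpick x xX.
    by move: (H0 a); rewrite /= aA fa eqxx.
  apply/ffunP => x; rewrite /phi /=.
  case xX: (x \in X).
    have [a aA [Hp fa]] := Hpick x xX.
    have aX : (a \in X) = false by rewrite inE aA.
    by rewrite /g /f1 !ffunE xX Hp aX fa.
  by rewrite /g /f1 !ffunE xX xX.
apply: leq_trans (subset_leq_card sub) _.
apply: leq_trans (leq_imset_card _ _) _.
rewrite cardsX.
have E1 : #|D1| = \prod_(x : 'I_n) (if x \in X then 1 else B).
  rewrite /D1 cardsE card_familyE.
  by apply: eq_bigr => x _; case: ifP => _; rewrite ?card1 ?cardT ?card_ord // size_enum_ord.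
have E2 : #|D2| = \prod_(x : 'I_n) (if x \in X then #|A| else 1).
  rewrite /D2 cardsE card_familyE.
  apply: eq_bigr => x _; case: ifP => _; rewrite ?card1 //.
rewrite E1 E2 !prod_if !exp1n mul1n muln1 card_ord mulnC.
by [].
Qed.

Definition rep (f : Fn) (Z : {set 'I_n}) : {set 'I_n} :=
  [set x in Z | [pick y in Z | f y == f x] == Some x].

Lemma rep_sub (f : Fn) (Z : {set 'I_n}) : rep f Z \subset Z.
Proof. by apply/subsetP => x; rewrite inE => /andP[]. Qed.

Lemma rep_cover (f : Fn) (Z : {set 'I_n}) (z : 'I_n) : z \in Z -> f z \in f @: rep f Z.
Proof.
move=> zZ.
case E: [pick y0 in Z | f y0 == f z] => [y|]; last first.
  by move: (pick_none E z); rewrite zZ eqxx.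
have /andP [yZ /eqP fyz] := pick_some E.
have Hp : [pick y0 in Z | f y0 == f y] = [pick y0 in Z | f y0 == f z].
  by apply: eq_pick => y0; rewrite fyz.
rewrite -fyz; apply: imset_f.
by rewrite inE yZ Hp E eqxx.
Qed.

Lemma rep_card (f : Fn) (Z : {set 'I_n}) : #|rep f Z| <= #|f @: Z|.
Proof.
have inj : {in rep f Z &, injective f}.
  move=> x x'; rewrite !inE => /andP [_ /eqP Hx] /andP [_ /eqP Hx'] fxx.
  have Hp : [pick y0 in Z | f y0 == f x] = [pick y0 in Z | f y0 == f x'].
    by apply: eq_pick => y0; rewrite fxx.
  by move: Hp; rewrite Hx Hx' => [[]].
rewrite -(card_in_imset inj).
by apply: subset_leq_card; apply: imsetS; apply: rep_sub.
Qed.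
End Count.

Lemma prod_const_ord K c : \prod_(r < K) c = expn c K.
Proof. elim: K => [|K IH]; first by rewrite big_ord0 expn0. by rewrite big_ord_recr IH expnSr. Qed.

Lemma sum_const_ord K c : \sum_(r < K) c = K * c.
Proof. elim: K => [|K IH]; first by rewrite big_ord0. by rewrite big_ord_recr IH mulSn addnC. Qed.

Lemma cancel_pow P N B s X c : P * expn B X <= N * expn s X -> c <= X -> s <= B -> 0 < B ->
  P * expn B c <= N * expn s c.
Proof.
move=> H cX sB B0.
move: H; rewrite -(subnKC cX) !expnD => H.
have H2 : N * (expn s c * expn s (X - c)) <= N * expn s c * expn B (X - c).
  by rewrite mulnA leq_mul2l leq_expl // orbT.
have := leq_trans H H2.
rewrite mulnA leq_pmul2r //; by rewrite expn_gt0 B0.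
Qed.

Section Count2.
Variables (n B K Kp : nat) (b0 : 'I_B).
Local Notation Fn := {ffun 'I_n -> 'I_B}.
Local Notation Hn := {ffun 'I_K -> Fn}.

Definition badZ (Z : {set 'I_n}) : {set Hn} :=
  [set h : Hn | \sum_(r < K) #|h r @: Z| + Kp * #|Z| < K * #|Z|].

Definition Aset (Z : {set 'I_n}) : {set {ffun 'I_K -> {set 'I_n}}} :=
  [set A : {ffun 'I_K -> {set 'I_n}} | [forall r, A r \subset Z] && (\sum_(r < K) #|A r| + Kp * #|Z| < K * #|Z|)].

Definition fam (Z : {set 'I_n}) (A : {ffun 'I_K -> {set 'I_n}}) : {set Hn} :=
  [set h : Hn | h \in finfun.family (fun r => [pred f | f \in @Gset n B Z (A r)])].

Lemma step1 Z : #|badZ Z| <= \sum_(A in Aset Z) #|fam Z A|.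
Proof.
rewrite -sum1_card.
apply: (@leq_trans (\sum_(h in badZ Z) \sum_(A in Aset Z) (h \in fam Z A))).
  apply: leq_sum => h; rewrite inE => hb.
  pose A0 := [ffun r => rep (h r) Z].
  have A0in : A0 \in Aset Z.
    rewrite inE; apply/andP; split.
      by apply/forallP => r; rewrite ffunE rep_sub.
    apply: leq_ltn_trans hb; rewrite leq_add2r; apply: leq_sum => r _.
    by rewrite ffunE rep_card.
  have hin : h \in fam Z A0.
    rewrite inE; apply/familyP => r; rewrite /= inE ffunE.
    by apply/forallP => z; apply/implyP => zZ; apply: rep_cover.
  by rewrite (bigD1 A0) //= hin.
rewrite exchange_big /=; apply: leq_sum => A _.
rewrite -sum1_card big_mkcond [X in _ <= X]big_mkcond /=.
by apply: leq_sum => h _; case: (h \in badZ Z); case: (h \in fam Z A).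
Qed.

Lemma step3 Z : #|Aset Z| <= expn 2 (#|Z| * K).
Proof.
have sub : Aset Z \subset [set A | A \in finfun.family (fun r => [pred X : {set 'I_n} | X \subset Z])].
  apply/subsetP => A; rewrite !inE => /andP [/forallP H _].
  by apply/familyP => r; rewrite inE; apply: H.
apply: leq_trans (subset_leq_card sub) _.
rewrite cardsE card_familyE.
rewrite (eq_bigr (fun _ => expn 2 #|Z|)); last first.
  move=> r _; rewrite -card_powerset; apply: eq_card => X; by rewrite powersetE.
by rewrite prod_const_ord expnM.
Qed.

Lemma step2 Z A : A \in Aset Z -> #|Z| <= B -> 0 < B ->
  #|fam Z A| * expn B (Kp * #|Z| + 1) <= expn (expn B n) K * expn #|Z| (Kp * #|Z| + 1).
Proof.
rewrite inE => /andP [/forallP AZ Hs] sB B0.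
set s := #|Z| in Hs sB *.
have cardfam : #|fam Z A| = \prod_(r < K) #|@Gset n B Z (A r)|.
  rewrite cardsE card_familyE; apply: eq_bigr => r _; by apply: eq_card.
have xa : forall r, #|Z :\: A r| + #|A r| = s.
  move=> r; rewrite cardsDS ?AZ // subnK //; exact: subset_leq_card.
have per : forall r, #|@Gset n B Z (A r)| * expn B #|Z :\: A r| <= expn B n * expn s #|Z :\: A r|.
  move=> r.
  have h1 := card_G b0 (AZ r).
  have xn : #|Z :\: A r| <= n by apply: leq_trans (max_card _) _; rewrite card_ord.
  apply: leq_trans (leq_mul h1 (leqnn _)) _.
  rewrite -mulnA -expnD subnK // mulnC leq_mul2l; apply/orP; right.
  apply: leq_expl; rewrite -(xa r); exact: leq_addl.
have prodle : \prod_(r < K) (#|@Gset n B Z (A r)| * expn B #|Z :\: A r|) <=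
   \prod_(r < K) (expn B n * expn s #|Z :\: A r|).
  by apply: leq_prod => r _; apply: per.
rewrite big_split /= [X in _ <= X]big_split /= -!expn_sum sum_const_ord in prodle.
rewrite cardfam -expnM [n * K]mulnC; apply: (cancel_pow prodle) => //.
have sumx : \sum_(r < K) #|Z :\: A r| + \sum_(r < K) #|A r| = K * s.
  by rewrite -big_split /= (eq_bigr (fun _ => s)) ?sum_const_ord // => r _; rewrite xa.
move: Hs sumx; set S1 := \sum_(r < K) #|Z :\: A r|; set S2 := \sum_(r < K) #|A r|.
clearbody S1 S2 s; clear. lia.
Qed.

Lemma card_badZ (Z : {set 'I_n}) : #|Z| <= B -> 0 < B ->
  #|badZ Z| * expn B (Kp * #|Z| + 1) <=
  expn 2 (#|Z| * K) * (expn (expn B n) K * expn #|Z| (Kp * #|Z| + 1)).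
Proof.
move=> sB B0.
apply: leq_trans (leq_mul (step1 Z) (leqnn _)) _.
rewrite big_distrl /=.
have S : \sum_(A in Aset Z) (#|fam Z A| * expn B (Kp * #|Z| + 1)) <=
    \sum_(A in Aset Z) (expn (expn B n) K * expn #|Z| (Kp * #|Z| + 1)).
  by apply: leq_sum => A HA; apply: step2.
apply: leq_trans S _.
rewrite sum_nat_const.
by apply: leq_mul; first exact: step3.
Qed.

End Count2.

Lemma union_bound (T I : finType) (P : pred I) (F : I -> {set T}) :
  #|[set x | [exists i, P i && (x \in F i)]]| <= \sum_(i | P i) #|F i|.
Proof.
rewrite -sum1_card.
apply: (@leq_trans (\sum_(x in [set x | [exists i, P i && (x \in F i)]]) \sum_(i | P i) (x \in F i))).
  apply: leq_sum => x; rewrite inE => /existsP [i /andP [Pi xi]].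
  by rewrite (bigD1 i) //= xi.
rewrite exchange_big /=; apply: leq_sum => i _.
rewrite -sum1_card big_mkcond [X in _ <= X]big_mkcond /=.
by apply: leq_sum => x _; case: (_ \in _); case: (x \in F i).
Qed.

Lemma geom_sum m (X : nat -> nat) a : X 0 = 0 -> (forall s, 0 < s -> X s * expn 2 s <= a) ->
  \sum_(s < m.+1) X s * expn 2 m <= a * (expn 2 m - 1).
Proof.
move=> X0 HX; elim: m => [|m IH].
  by rewrite big_ord1 X0.
rewrite big_ord_recr /=.
have E : \sum_(i < m.+1) X i * expn 2 m.+1 = 2 * (\sum_(i < m.+1) X i * expn 2 m).
  rewrite big_distrr /=; apply: eq_bigr => i _; rewrite expnS; lia.
rewrite E.
have H1 := HX m.+1 (ltn0Sn m).
have H2 : 1 <= expn 2 m by rewrite expn_gt0.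
rewrite expnS.
move: IH H1; rewrite expnS.
set S := \sum_(i < m.+1) X i * expn 2 m.
set e := expn 2 m. set x := X m.+1. clearbody S e x. nia.
Qed.

Lemma exists_good n D k : 0 < D -> n < expn 2 k.+1 * D ->
  exists h : {ffun 'I_(20 * (k + 4)) -> {ffun 'I_n -> 'I_(expn 2 21 * (5 * D))}},
  forall Z : {set 'I_n}, #|Z| <= 5 * D ->
    20 * (k + 4) * #|Z| <= \sum_(r < 20 * (k + 4)) #|h r @: Z| + (k + 4) * #|Z|.
Proof.
move=> D0 nD.
set M := 5 * D. set Kp := k + 4. set K := 20 * Kp. set B := expn 2 21 * M.
have M0 : 0 < M by rewrite /M; lia.
have MB : M <= B by rewrite /B leq_pmull // expn_gt0.
have B0 : 0 < B by apply: leq_trans MB.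
pose b0 : 'I_B := Ordinal B0.
have nM : n < expn 2 k.+1 * M.
  apply: leq_trans nD _; rewrite leq_mul2l /M; apply/orP; right; lia.
pose all := #|{: {ffun 'I_K -> {ffun 'I_n -> 'I_B}}}|.
have allE : all = expn (expn B n) K by rewrite /all !card_ffun !card_ord.
have all0 : 0 < all by rewrite allE !expn_gt0 B0.
pose b (Z : {set 'I_n}) := #|badZ B K Kp Z|.
have perZ : forall Z : {set 'I_n}, 0 < #|Z| -> #|Z| <= M ->
    b Z * expn 2 #|Z| * 'C(n, #|Z|) <= all.
  move=> Z s0 sM.
  have h1 := card_badZ K Kp b0 (leq_trans sM MB) B0.
  have h2 := key_num s0 sM nM (leqnn _).
  move: h2; rewrite -/Kp; change (20 * Kp) with K; change (expn 2 21 * M) with B => h2.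
  rewrite allE; set AL := expn (expn B n) K in h1 *.
  set s := #|Z| in h1 h2 *.
  set c := Kp * s + 1 in h1 h2 *.
  rewrite -(@leq_pmul2r (expn B c)); last by rewrite expn_gt0 B0.
  move: h1 h2; rewrite /b.
  set x := #|badZ B K Kp Z|. set y := expn B c. set z := expn 2 (s * K).
  set u := expn 2 s. set v := 'C(n, s). set w := expn s c.
  move=> h1 h2.
  apply: (@leq_trans (u * v * (z * (AL * w)))).
    have -> : x * u * v * y = u * v * (x * y) by lia.
    by apply: leq_mul.
  have -> : u * v * (z * (AL * w)) = AL * (u * v * z * w) by lia.
  by rewrite leq_mul2l h2 orbT.
pose P := fun Z : {set 'I_n} => #|Z| <= M.
pose Bad := [set h : {ffun 'I_K -> {ffun 'I_n -> 'I_B}} | [exists Z, P Z && (h \in badZ B K Kp Z)]].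
have cardBad : #|Bad| < all.
  apply: leq_ltn_trans (union_bound P (badZ B K Kp)) _.
  rewrite (partition_big (fun Z : {set 'I_n} => (inord #|Z| : 'I_n.+1)) predT) //=.
  pose X s := \sum_(Z : {set 'I_n} | P Z && (#|Z| == s)) b Z.
  have EX : \sum_(j < n.+1) \sum_(Z | P Z && (inord #|Z| == j)) #|badZ B K Kp Z| = \sum_(j < n.+1) X j.
    apply: eq_bigr => j _; apply: eq_bigl => Z.
    have Zn : #|Z| < n.+1 by rewrite ltnS; apply: leq_trans (max_card _) _; rewrite card_ord.
    by rewrite -val_eqE /= inordK.
  rewrite EX.
  have X0 : X 0 = 0.
    apply: big1 => Z /andP [_ /eqP Z0]; rewrite /b; apply/eqP; rewrite cards_eq0; apply/eqP.
    by apply/setP => h; rewrite !inE Z0 !muln0 ltn0.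
  have HX : forall s, 0 < s -> X s * expn 2 s <= all.
    move=> s s0.
    case: (posnP 'C(n, s)) => [C0|Cpos].
      rewrite (_ : X s = 0) //; apply: big1 => Z /andP [_ /eqP Zs].
      have : 0 < 'C(n, s) by rewrite bin_gt0 -Zs; apply: leq_trans (max_card _) _; rewrite card_ord.
      by rewrite C0.
    rewrite -(leq_pmul2r Cpos) /X !big_distrl /=.
    apply: (@leq_trans (\sum_(Z | P Z && (#|Z| == s)) all)).
      apply: leq_sum => Z /andP [PZ /eqP Zs]; rewrite -Zs; apply: perZ => //; by rewrite Zs.
    rewrite sum_nat_const mulnC leq_mul2l; apply/orP; right.
    have Cd : #|[set A : {set 'I_n} | #|A| == s]| = 'C(n, s) by rewrite card_draws card_ord.
    rewrite -Cd; apply: subset_leq_card; apply/subsetP => Z; rewrite !inE => /andP [].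
    by [].
  have G := geom_sum n X0 HX.
  have e0 : 0 < expn 2 n by rewrite expn_gt0.
  rewrite -(ltn_pmul2r e0) big_distrl /=.
  apply: leq_ltn_trans G _.
  rewrite ltn_pmul2l //; lia.
have [h hB] : exists h, h \notin Bad.
  case: (pickP (fun h => h \notin Bad)) => [h hB|none]; first by exists h.
  exfalso.
  have : all <= #|Bad|.
    rewrite /all -cardsT; apply: subset_leq_card; apply/subsetP => h _.
    by have := none h; rewrite /= => /negbFE.
  by rewrite leqNgt cardBad.
exists h => Z ZM.
move: hB; rewrite inE negb_exists => /forallP /(_ Z).
by rewrite /P ZM /= inE -leqNgt.
Qed.

Lemma take_set (T : finType) (A : {set T}) k : k <= #|A| ->
  [set x in take k (enum A)] \subset A /\ #|[set x in take k (enum A)]| = k.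
Proof.
move=> kA; split.
  by apply/subsetP => x; rewrite inE => /mem_take; rewrite mem_enum.
have U : uniq (take k (enum A)) by rewrite take_uniq ?enum_uniq.
rewrite cardsE; move/card_uniqP: U => ->.
by rewrite size_takel // -cardE.
Qed.

Lemma nonalone (T U : finType) (f : T -> U) (S : {set T}) :
  #|[set z in S | [exists y in S, (y != z) && (f y == f z)]]| + 2 * #|f @: S| <= 2 * #|S|.
Proof.
set N := [set z in S | _].
have NS : N \subset S by apply/subsetP => z; rewrite inE => /andP [].
have h1 : #|f @: S| <= #|f @: (S :\: N)| + #|f @: N|.
  apply: leq_trans (leq_card_setU _ _); apply: subset_leq_card.
  apply/subsetP => u /imsetP [z zS ->]; rewrite inE.
  case zN : (z \in N); first by apply/orP; right; apply: imset_f.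
  by apply/orP; left; apply: imset_f; rewrite inE zN.
have h2 : #|f @: (S :\: N)| <= #|S| - #|N|.
  by rewrite -cardsDS //; apply: leq_imset_card.
have h3 : 2 * #|f @: N| <= #|N|.
  rewrite -[#|N|]sum1_card (partition_big_imset f) /= mulnC -sum_nat_const.
  rewrite big_mkcond [X in _ <= X]big_mkcond /=.
  apply: leq_sum => u _; case: ifP => // /imsetP [z zN ->].
  rewrite sum1_card.
  have := zN; rewrite inE => /andP [zS /existsP [y /andP [yS /andP [yz /eqP fyz]]]].
  have yN : y \in N.
    rewrite inE yS /=; apply/existsP; exists z; rewrite zS /= eq_sym yz /=.
    by rewrite fyz.
  clearbody N.
  have : #|[set z; y]| <= #|[pred i in N | f i == f z]|.
    apply: subset_leq_card; apply/subsetP => x; rewrite !inE => /orP [] /eqP ->.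
      by rewrite zN eqxx.
    by rewrite yN fyz eqxx.
  by rewrite cards2 eq_sym yz.
have NS' : #|N| <= #|S| by apply: subset_leq_card.
lia.
Qed.

Section Alg.
Variables (n K B l : nat) (h : {ffun 'I_K -> {ffun 'I_n -> 'I_B}}).

Definition gtests (j : 'I_(K * B)) : {set 'I_n} :=
  [set x | [exists r : 'I_K, (val r == j %/ B) && (val (h r x) == j %% B)]].

Definition posf (a : 'I_(K * B) -> bool) (r : 'I_K) (b : 'I_B) : bool :=
  [exists j : 'I_(K * B), (j %/ B == val r) && (j %% B == val b) && a j].

Definition Sset (P : 'I_K -> 'I_B -> bool) : {set 'I_n} := [set x | [forall r, P r (h r x)]].

Definition Idset (P : 'I_K -> 'I_B -> bool) : {set 'I_n} :=
  [set x | [exists r, P r (h r x) && [forall y, (y \in Sset P) ==> (h r y == h r x) ==> (y == x)]]].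

Definition gdecode (a : 'I_(K * B) -> bool) : {set 'I_n} :=
  [set x in take l (enum (Idset (posf a)))].

Definition galg : nonadaptive_alg n := @NonAdaptive n (K * B) gtests gdecode.

Lemma Idset_ext P Q : (forall r b, P r b = Q r b) -> Idset P = Idset Q.
Proof.
move=> PQ.
have SE : Sset P = Sset Q by apply/setP => x; rewrite !inE; apply: eq_forallb => r; rewrite PQ.
by apply/setP => x; rewrite !inE SE; apply: eq_existsb => r; rewrite PQ.
Qed.

Lemma posf_correct (I : {set 'I_n}) r b :
  posf (fun j => test_answer I (gtests j)) r b = (b \in h r @: I).
Proof.
apply/idP/idP.
  case/existsP => j /andP [/andP [/eqP jr /eqP jb]].
  rewrite /test_answer => /set0Pn [x]; rewrite !inE => /andP [/existsP [r' /andP [/eqP r'j /eqP hx]] xI].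
  have rr : r' = r by apply: val_inj; rewrite r'j jr.
  rewrite rr in hx.
  by apply/imsetP; exists x => //; apply: val_inj; rewrite hx jb.
case/imsetP => x xI ->.
have B0 : 0 < B by case: (h r x) => v; case: B => // _; rewrite ltn0.
have lt : r * B + h r x < K * B.
  have := ltn_ord r; have := ltn_ord (h r x); move=> H1 H2.
  apply: (@leq_trans (r * B + B)); first by rewrite ltn_add2l.
  by rewrite -mulSnr leq_mul2r H2 orbT.
apply/existsP; exists (Ordinal lt) => /=.
rewrite divnMDl // divn_small ?addn0 // eqxx modnMDl modn_small // eqxx /=.
rewrite /test_answer; apply/set0Pn; exists x; rewrite !inE xI andbT.
by apply/existsP; exists r; rewrite /= divnMDl // divn_small ?addn0 // eqxx modnMDl modn_small // eqxx.
Qed.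


Lemma galg_ok (Kp D d : nat) (I : {set 'I_n}) :
  K = 20 * Kp -> 0 < Kp -> 0 < D ->
  (forall Z : {set 'I_n}, #|Z| <= 5 * D ->
     K * #|Z| <= \sum_(r < K) #|h r @: Z| + Kp * #|Z|) ->
  #|I| = d -> D <= 4 * d -> d <= 4 * D -> 8 * l <= D ->
  run galg I \subset I /\ #|run galg I| = l.
Proof.
move=> HK Kp0 D0 good Icard Dd dD lD.
set P0 := fun r (b : 'I_B) => b \in h r @: I.
have E : run galg I = [set x in take l (enum (Idset P0))].
  by rewrite /run /= /gdecode (Idset_ext (posf_correct I)).
set S := Sset P0. set Id := Idset P0.
have IS : I \subset S.
  by apply/subsetP => x xI; rewrite inE; apply/forallP => r; apply: imset_f.
have IdI : Id \subset I.
  apply/subsetP => x; rewrite inE => /existsP [r /andP [/imsetP [y yI hy] /forallP H]].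
  have := H y; rewrite (subsetP IS y yI) /= -hy eqxx /= => /eqP <-.
  exact: yI.
have cardId : l <= #|Id|.
  set F := S :\: I.
  have FD : #|F| < D.
    rewrite ltnNge; apply/negP => DF.
    have [YF cY] := take_set DF.
    set Y := [set x in take D (enum F)] in YF cY. clearbody Y.
    set Z := I :|: Y.
    have IY : I :&: Y = set0.
      apply/setP => x; rewrite !inE; case xI: (x \in I) => //=; apply/negP => xY.
      by have := subsetP YF x xY; rewrite inE xI.
    have cZ : #|Z| = d + D by rewrite -Icard -cY -cardsUI IY cards0 addn0.
    have hZ : forall r, #|h r @: Z| <= d.
      move=> r; rewrite -Icard; apply: leq_trans (leq_imset_card (h r) I).
      apply: subset_leq_card; apply/subsetP => u /imsetP [z]; rewrite inE => /orP [zI|zY] ->.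
        exact: imset_f.
      have := subsetP YF z zY; rewrite inE => /andP [_]; rewrite inE => /forallP.
      by move/(_ r).
    have sZ : \sum_(r < K) #|h r @: Z| <= K * d.
      rewrite -sum_const_ord; apply: leq_sum => r _; exact: hZ.
    have := good Z; rewrite cZ => /(_ (ltac:(lia))).
    move: sZ; set SS := \sum_(r < K) _; rewrite HK; clearbody SS => sZ G.
    have : 20 * Kp * (d + D) <= 20 * Kp * d + Kp * (d + D) by lia.
    move=> H1.
    have H2 : Kp * (20 * D) <= Kp * (d + D) by nia.
    move: H2; rewrite leq_pmul2l //; lia.
  have cS : #|S| = d + #|F|.
    by rewrite /F cardsDS // Icard subnKC // -Icard subset_leq_card.
  set U := I :\: Id.
  pose N r := [set z in S | [exists y in S, (y != z) && (h r y == h r z)]].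
  have UN : forall r, #|U| <= #|N r|.
    move=> r; apply: subset_leq_card; apply/subsetP => x; rewrite inE => /andP [xId xI].
    rewrite inE (subsetP IS x xI) /=.
    move: xId; rewrite inE negb_exists => /forallP /(_ r).
    rewrite negb_and /P0 (imset_f (h r) xI) /= negb_forall => /existsP [y].
    rewrite negb_imply => /andP [yS]; rewrite negb_imply => /andP [hy yx].
    by apply/existsP; exists y; rewrite yS yx hy.
  have sU : K * #|U| <= \sum_(r < K) #|N r|.
    rewrite -sum_const_ord; apply: leq_sum => r _; exact: UN.
  have sN : \sum_(r < K) #|N r| + 2 * \sum_(r < K) #|h r @: S| <= K * (2 * #|S|).
    rewrite big_distrr /= -big_split /= -sum_const_ord; apply: leq_sum => r _.
    exact: nonalone.
  have gS := good S; rewrite cS in gS sN.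
  have := gS (ltac:(lia)).
  have IU : d <= #|Id| + #|U|.
    rewrite -Icard; apply: leq_trans (leq_card_setU Id U); apply: subset_leq_card.
    apply/subsetP => x xI; rewrite inE; case xId : (x \in Id) => //=.
    by rewrite inE xId xI.
  move: sU sN; set A1 := \sum_(r < K) #|N r|; set A2 := \sum_(r < K) #|h r @: S|.
  rewrite HK; clearbody A1 A2 => sU sN G.
  have H1 : Kp * (20 * #|U|) <= Kp * (2 * (d + #|F|)) by nia.
  move: H1; rewrite leq_pmul2l // => H1.
  lia.
rewrite E; have [sub card] := take_set cardId; split => //.
exact: subset_trans sub IdI.
Qed.

End Alg.


Theorem theorem8 :
  exists C : R, (0 < C)%R /\
  forall n D l : nat, 8 * l <= D ->
  exists A : nonadaptive_alg n,
    forall d : nat, d <= 4 * D -> D <= 4 * d -> d <= n ->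
      detects A l d /\
      (INR (@ntests n A) <= C * INR d * (log2 (INR n / INR d) + 1))%R.
Proof.
exists (INR (6 * (400 * expn 2 21))); split.
  by apply: lt_0_INR; apply/ltP; rewrite !muln_gt0.
move=> n D l lD.
have C0 : (0 <= INR (6 * (400 * expn 2 21)))%R by apply: pos_INR.
case: (posnP l) => [l0|lpos].
  exists (@NonAdaptive n 0 (fun _ => set0) (fun _ => set0)) => d dD Dd dn.
  split.
    by move=> I _; rewrite /run /= sub0set cards0 l0.
  rewrite (_ : INR (ntests _) = 0%R) //.
  case: (posnP d) => [d0|dpos].
    by rewrite d0 (_ : INR 0 = 0%R) // Rmult_0_r Rmult_0_l; apply: Rle_refl.
  have L0 := log2_ge0 dpos dn.
  have := pos_INR d; move=> Hd.
  apply: Rmult_le_pos; last lra.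
  by apply: Rmult_le_pos.
have D0 : 0 < D by lia.
set k := trunc_log 2 (n %/ D).
have nD : n < expn 2 k.+1 * D by rewrite -ltn_divLR // trunc_log_ltn.
have [h good] := exists_good D0 nD.
exists (galg l h) => d dD Dd dn.
have dpos : 0 < d by lia.
split.
  move=> I Icard.
  apply: (@galg_ok _ _ _ l h (k + 4) D d I) => //; by rewrite addn4.
change (INR (@ntests n (galg l h))) with (INR (20 * (k + 4) * (expn 2 21 * (5 * D)))).
apply: final_bound => //.
case: (posnP (n %/ D)) => [n0|npos].
  by left; rewrite /k n0 trunc_log0.
right.
have H1 : expn 2 k * D <= n by rewrite -leq_divRL // trunc_logP.
apply: leq_trans (_ : expn 2 k * (4 * D) <= _).
  by rewrite leq_mul2l dD orbT.
by rewrite mulnCA leq_mul2l H1 orbT.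
Qed.
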